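(* Let $\mathcal{X},\mathcal{Y},\mathcal{B}\ge 1$ and $D\ge1$ be integers. Consider the operator variables $\{\rho_x\}_{x=1}^{\mathcal{X}}\cup\{M_y^b\}_{y\in[\mathcal{Y}],b\in[\mathcal{B}]}$, and let the feasible set $\Xi$ be the set of all tuples of $D\times D$ complex matrices satisfying $\rho_x\succeq0$, $M_y^b\succeq0$ and $\sum_b M_y^b=\mathbb{1}$ for every $y$. Let $\mathcal{A}$ be the group of all permutations $\pi$ of the index set of these $\mathcal{X}+\mathcal{B}\mathcal{Y}$ variables such that for every feasible tuple $(\overline X_i)_i\in\Xi$, the permuted tuple $(\overline X_{\pi^{-1}(i)})_i$ is again in $\Xi$. Then every element of $\mathcal{A}$ can be written uniquely as a product $\boldsymbol{\xi}\,\boldsymbol{\psi}\,\boldsymbol{\beta_1}\cdots\boldsymbol{\beta_{\mathcal{Y}}}$, where: (i) $\boldsymbol{\xi}$, for $\xi\in S_{\mathcal{X}}$, acts by $\rho_x\mapsto\rho_{\xi(x)}$, $M_y^b\mapsto M_y^b$; (ii) $\boldsymbol{\psi}$, for $\psi\in S_{\mathcal{Y}}$, acts by $\rho_x\mapsto\rho_x$, $M_y^b\mapsto M_{\psi(y)}^b$; (iii) $\boldsymbol{\beta_y}$, for $\beta_y\in S_{\mathcal{B}}$, acts by $\rho_x\mapsto\rho_x$, $M_y^b\mapsto M_y^{\beta_y(b)}$, and $M_{y'}^b\mapsto M_{y'}^b$ for $y'\ne y$. In particular $|\mathcal{A}|=\mathcal{X}!\,\mathcal{Y}!\,(\mathc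al{B}!)^{\mathcal{Y}}$.
   Context: This is the prepare-and-measure scenario: states $\rho_x$ indexed by inputs $x$ and measurements $\{M_y^b\}_b$ indexed by inputs $y$ with outcomes $b$. $S_n$ denotes the symmetric group on $n$ elements. A permutation $\pi$ of variable indices acts on a tuple of matrices by relabelling the variables. *)

(* Defs.v *)
From HB Require Import structures.
From mathcomp Require Import all_boot all_order all_algebra all_fingroup.
From mathcomp Require Import spectral complex.
From mathcomp Require Import boolp reals.
Set Implicit Arguments. Unset Strict Implicit. Unset Printing Implicit Defensive.
Import Order.TTheory GRing.Theory Num.Theory.
Local Open Scope ring_scope.
Local Open Scope sesquilinear_scope.

Definition psdmx (C : numClosedFieldType) (D : nat) (A : 'M[C]_D) : Prop :=
  A ^t* = A /\ forall v : 'rV[C]_D, 0 <= (v *m A *m v ^t*) 0 0.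

(* Index set of the variables: inl x  <-> rho_x ;  inr (y, b) <-> M_y^b. *)
Definition Index (X Y B : nat) : finType := ('I_X + 'I_Y * 'I_B)%type.

Definition feasible (C : numClosedFieldType) (X Y B D : nat)
    (T : Index X Y B -> 'M[C]_D) : Prop :=
  (forall x : 'I_X, psdmx (T (inl x))) /\
  (forall (y : 'I_Y) (b : 'I_B), psdmx (T (inr (y, b)))) /\
  (forall y : 'I_Y, \sum_(b < B) T (inr (y, b)) = 1%:M).

Definition symA (C : numClosedFieldType) (X Y B D : nat) : {set {perm Index X Y B}} :=
  [set pi : {perm Index X Y B} |
     `[< forall T : Index X Y B -> 'M[C]_D,
           feasible T -> feasible (fun i => T ((pi^-1)%g i)) >] ].

Definition xi_fun X Y B (xi : {perm 'I_X}) (i : Index X Y B) : Index X Y B :=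
  match i with inl x => inl (xi x) | inr p => inr p end.
Lemma xi_fun_inj X Y B xi : injective (@xi_fun X Y B xi).
Proof. move=> [a|a] [b|b] //= [] /perm_inj ->. done. Qed.
Definition xi_perm X Y B xi : {perm Index X Y B} := perm (@xi_fun_inj X Y B xi).

Definition psi_fun X Y B (psi : {perm 'I_Y}) (i : Index X Y B) : Index X Y B :=
  match i with inl x => inl x | inr (y, b) => inr (psi y, b) end.
Lemma psi_fun_inj X Y B psi : injective (@psi_fun X Y B psi).
Proof. move=> [a|[a1 a2]] [b|[b1 b2]] //= [] /perm_inj -> ->. done. Qed.
Definition psi_perm X Y B psi : {perm Index X Y B} := perm (@psi_fun_inj X Y B psi).

Definition beta_fun X Y B (y0 : 'I_Y) (beta : {perm 'I_B}) (i : Index X Y B)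
  : Index X Y B :=
  match i with
  | inl x => inl x
  | inr (y, b) => inr (y, if y == y0 then beta b else b)
  end.
Lemma beta_fun_inj X Y B y0 beta : injective (@beta_fun X Y B y0 beta).
Proof.
move=> [a|[a1 a2]] [b|[b1 b2]] //= [] <-.
case: eqP => _; last by move=> ->.
by move/perm_inj => ->.
Qed.
Definition beta_perm X Y B y0 beta : {perm Index X Y B} :=
  perm (@beta_fun_inj X Y B y0 beta).

Definition decomp X Y B
    (t : {perm 'I_X} * {perm 'I_Y} * {ffun 'I_Y -> {perm 'I_B}}) : {perm Index X Y B} :=
  (@xi_perm X Y B t.1.1 * @psi_perm X Y B t.1.2 *
     \prod_(y < Y) @beta_perm X Y B y (t.2 y))%g.

(* Main.v *)
Require Import Defs.
From HB Require Import structures.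
From mathcomp Require Import all_boot all_order all_algebra all_fingroup.
From mathcomp Require Import spectral complex.
From mathcomp Require Import boolp reals.
From mathcomp Require Import zify.
Import Order.TTheory GRing.Theory Num.Theory.
Set Implicit Arguments. Unset Strict Implicit. Unset Printing Implicit Defensive.
Local Open Scope ring_scope.

Lemma psd_nat (C : numClosedFieldType) D (n : nat) : psdmx ((n%:R : C)%:M : 'M[C]_D).
Proof.
split.
  by apply/matrixP => i j; rewrite !mxE eq_sym rmorphMn /= conjC_nat.
move=> v; rewrite mul_mx_scalar -scalemxAl mxE mulr_ge0 ?ler0n //.
rewrite mxE sumr_ge0 // => j _; rewrite !mxE mul_conjC_ge0 //.
Qed.

Definition Tc {C : numClosedFieldType} X Y B D (chi : Index X Y B -> bool)
  : Index X Y B -> 'M[C]_D := fun i => ((chi i : nat)%:R : C)%:M.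

Definition valid X Y B (chi : Index X Y B -> bool) :=
  forall y : 'I_Y, (\sum_(b < B) chi (inr (y, b)) = 1)%N.

Lemma feasible_Tc (C : numClosedFieldType) X Y B D (HD : (0 < D)%N)
  (chi : Index X Y B -> bool) : feasible (@Tc C X Y B D chi) <-> valid chi.
Proof.
split.
  case=> _ [_ Hs] y; have := Hs y; rewrite /Tc.
  move/matrixP/(_ (Ordinal HD) (Ordinal HD)); rewrite summxE !mxE eqxx /= mulr1n.
  under eq_bigr do rewrite mxE mulr1n.
  by rewrite -natr_sum => /eqP; rewrite pnatr_eq1 => /eqP.
move=> Hv; split; first by move=> x; apply: psd_nat.
split; first by move=> y b; apply: psd_nat.
move=> y; apply/matrixP => i j; rewrite summxE !mxE.
under eq_bigr do rewrite mxE.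
by rewrite sumrMnl -natr_sum Hv; case: (i == j).
Qed.
Section Comb.
Variables (X Y B : nat) (HY : (0 < Y)%N) (HB : (0 < B)%N).

Lemma sum_eq1_ex (f : 'I_B -> bool) : (\sum_(b < B) f b = 1)%N -> exists b, f b.
Proof.
move=> H; case: (pickP f) => [b fb|f0]; first by exists b.
by rewrite big1 in H => // b _; rewrite f0.
Qed.

Lemma sum_ge2 (f : 'I_B -> bool) b1 b2 : b1 != b2 -> f b1 -> f b2 ->
  (2 <= \sum_(b < B) f b)%N.
Proof.
move=> ne f1 f2; rewrite (bigD1 b1) // (bigD1 b2) /=; last by rewrite eq_sym.
by rewrite f1 f2.
Qed.

Lemma sum_sel (c : 'I_B) : (\sum_(b < B) (b == c) = 1)%N.
Proof. rewrite (bigD1 c) //= eqxx big1 // => b /negbTE -> //. Qed.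

Lemma sum_mono (f g : 'I_B -> bool) b : (forall b, g b -> f b) ->
  (\sum_(b < B) f b = 1)%N -> (\sum_(b < B) g b = 1)%N -> f b = g b.
Proof.
move=> fg Hf Hg; case Efb: (f b); case Egb: (g b) => //; last by have := fg b; rewrite Efb Egb; move/(_ isT).
move: Hf Hg; rewrite (bigD1 b) //= (bigD1 b (P := xpredT)) //= Efb Egb.
have : (\sum_(i < B | i != b) g i <= \sum_(i < B | i != b) f i)%N.
  by apply: leq_sum => i _; case: (g i) (fg i) => // ->.
rewrite /nat_of_bool => h1 h2 h3; exfalso. rewrite add0n in h3; rewrite h3 in h1. move: h2; rewrite -[1%N]addn0 => /eqP; rewrite eqn_add2l => /eqP h2. by rewrite h2 in h1.
Qed.

Definition sel (ch : 'I_Y -> 'I_B) (r : 'I_X -> bool) : Index X Y B -> bool :=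
  fun i => match i with inl x => r x | inr (y, c) => c == ch y end.

Lemma valid_sel ch r : valid (sel ch r).
Proof. by move=> y; apply: sum_sel. Qed.

Let b0 := Ordinal HB.
Let y0 := Ordinal HY.

Variable s : {perm Index X Y B}.
Hypothesis Hs : forall chi : Index X Y B -> bool, valid chi -> valid (fun i => chi (s i)).

Lemma s_inr y b : exists p, s (inr (y, b)) = inr p.
Proof.
case E: (s (inr (y, b))) => [x|p]; last by exists p.
have H1 := Hs (valid_sel (fun _ => b0) (fun x' => x' == x)) y.
have H2 := Hs (valid_sel (fun _ => b0) (fun _ => false)) y.
have := @sum_mono (fun c => sel (fun _ => b0) (fun x' => x' == x) (s (inr (y, c))))
   (fun c => sel (fun _ => b0) (fun _ => false) (s (inr (y, c)))) b _ H1 H2.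
rewrite E /= eqxx => H; suff : true = false by [].
apply: H => c; case: (s (inr (y, c))) => [x'|[y' c']] //=.
Qed.

Definition blk (i : Index X Y B) : 'I_Y := match i with inl _ => y0 | inr p => p.1 end.
Definition bof (i : Index X Y B) : 'I_B := match i with inl _ => b0 | inr p => p.2 end.
Definition g y := blk (s (inr (y, b0))).

Lemma s_blk y b : s (inr (y, b)) = inr (g y, bof (s (inr (y, b)))).
Proof.
have [[y1 c1] E1] := s_inr y b; have [[y2 c2] E2] := s_inr y b0.
rewrite /g E1 E2 /=; congr (inr (_, _)); apply/eqP; apply: contraT => ne.
have Hb : b != b0.
  by apply/eqP => eb; move: E1; rewrite eb E2 => -[] e; move: ne; rewrite e eqxx.
have := Hs (valid_sel (fun z => if z == y1 then c1 else c2) (fun _ => false)) y.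
have := @sum_ge2 (fun c => sel (fun z => if z == y1 then c1 else c2) (fun _ => false)
   (s (inr (y, c)))) b b0 Hb.
rewrite /= E1 E2 /= eqxx [y2 == y1]eq_sym (negbTE ne) eqxx => /(_ isT (eqxx _)) H1 H2.
by rewrite H2 in H1.
Qed.

Lemma g_inj : injective g.
Proof.
move=> y y' E; apply/eqP; apply: contraT => ne.
have [b Hb] := sum_eq1_ex (Hs (valid_sel (fun _ => bof (s (inr (y, b0)))) (fun _ => false)) y').
move: Hb => /=; rewrite {1}(s_blk y' b) /= => /eqP Hb.
have : s (inr (y', b)) = s (inr (y, b0)) by rewrite (s_blk y' b) Hb -E -(s_blk y b0).
by move/perm_inj => -[] /eqP; rewrite eq_sym (negbTE ne).
Qed.

Lemma s_inl x : exists x', s (inl x) = inl x'.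
Proof.
case E: (s (inl x)) => [x'|[y c]]; first by exists x'.
pose gp := perm g_inj.
have gz : g (gp^-1 y)%g = y by have := permKV gp y; rewrite permE.
have [b Hb] := sum_eq1_ex (Hs (valid_sel (fun _ => c) (fun _ => false)) (gp^-1 y)%g).
move: Hb => /=; rewrite s_blk /= => /eqP Hb.
have : s (inr ((gp^-1 y)%g, b)) = s (inl x) by rewrite s_blk Hb gz E.
by move/perm_inj.
Qed.


Definition K x := match (s^-1)%g (inl x) with inl x' => x' | inr _ => x end.
Definition G y := blk ((s^-1)%g (inr (y, b0))).
Definition H y b := bof ((s^-1)%g (inr (y, b))).

Lemma p_inl x : (s^-1)%g (inl x) = inl (K x).
Proof.
rewrite /K; case E: ((s^-1)%g (inl x)) => [x'|[y b]] //.
by have := permKV s (inl x); rewrite E s_blk.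
Qed.

Lemma p_inr y b : exists z c, (s^-1)%g (inr (y, b)) = inr (z, c) /\ g z = y.
Proof.
case E: ((s^-1)%g (inr (y, b))) => [x|[z c]].
  by have [x' Ex'] := s_inl x; have := permKV s (inr (y, b)); rewrite E Ex'.
exists z, c; split => //.
by have := permKV s (inr (y, b)); rewrite E s_blk => -[].
Qed.

Lemma gG y : g (G y) = y.
Proof. by have [z [c [E gz]]] := p_inr y b0; rewrite /G E. Qed.

Lemma p_inrE y b : (s^-1)%g (inr (y, b)) = inr (G y, H y b).
Proof.
have [z [c [E gz]]] := p_inr y b; rewrite /H E /=; congr (inr (_, _)).
by apply: g_inj; rewrite gz gG.
Qed.

Lemma K_inj : injective K.
Proof.
move=> x x' e; have : (s^-1)%g (inl x) = (s^-1)%g (inl x') by rewrite !p_inl e.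
by move/perm_inj => -[].
Qed.

Lemma G_inj : injective G.
Proof. exact: (can_inj gG). Qed.

Lemma H_inj y : injective (H y).
Proof.
move=> b b' e; have : (s^-1)%g (inr (y, b)) = (s^-1)%g (inr (y, b')) by rewrite !p_inrE e.
by move/perm_inj => -[].
Qed.

End Comb.

Lemma beta_prodE X Y B (f : 'I_Y -> {perm 'I_B}) (r : seq 'I_Y) : uniq r ->
 (forall x, (\prod_(y <- r) @beta_perm X Y B y (f y))%g (inl x) = inl x) /\
 (forall y' b, (\prod_(y <- r) @beta_perm X Y B y (f y))%g (inr (y', b))
     = inr (y', if y' \in r then f y' b else b)).
Proof.
elim: r => [|a r IH] /=; first by rewrite !big_nil; split => *; rewrite perm1.
move=> /andP[ar ur]; have [IH1 IH2] := IH ur; rewrite big_cons.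
split => [x|y' b]; rewrite permM permE /= ?IH1 // IH2 in_cons.
case: (eqVneq y' a) => [->|ne]; first by rewrite (negbTE ar).
by [].
Qed.

Lemma decompE_inl X Y B t x : @decomp X Y B t (inl x) = inl (t.1.1 x).
Proof.
rewrite /decomp !permM !permE /=.
by have [h _] := @beta_prodE X Y B t.2 _ (index_enum_uniq 'I_Y); rewrite h.
Qed.

Lemma decompE_inr X Y B t y b :
  @decomp X Y B t (inr (y, b)) = inr (t.1.2 y, t.2 (t.1.2 y) b).
Proof.
rewrite /decomp !permM !permE /=.
by have [_ h] := @beta_prodE X Y B t.2 _ (index_enum_uniq 'I_Y); rewrite h mem_index_enum.
Qed.

Lemma decomp_inj X Y B (HB : (0 < B)%N) : injective (@decomp X Y B).
Proof.
move=> [[xi psi] f] [[xi' psi'] f'] E.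
have e1 i : decomp (xi, psi, f) i = decomp (xi', psi', f') i by rewrite E.
have Exi : xi = xi'.
  by apply/permP => x; move: (e1 (inl x)); rewrite !decompE_inl /= => -[].
have Epsi : psi = psi'.
  by apply/permP => y; move: (e1 (inr (y, Ordinal HB))); rewrite !decompE_inr /= => -[].
subst xi' psi'.
have Ef : f = f'.
  apply/ffunP => z; apply/permP => b.
  by move: (e1 (inr ((psi^-1)%g z, b))); rewrite !decompE_inr /= permKV => -[].
by rewrite Ef.
Qed.

Lemma decomp_in_symA (C : numClosedFieldType) X Y B D t :
  @decomp X Y B t \in symA C X Y B D.
Proof.
rewrite inE; apply/asboolP => T [H1 [H2 H3]].
set p := decomp t.
have pinl x : (p^-1)%g (inl x) = inl ((t.1.1^-1)%g x).
  by apply: (canLR (permK p)); rewrite decompE_inl /= permKV.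
have pinr y b : (p^-1)%g (inr (y, b)) = inr ((t.1.2^-1)%g y, ((t.2 y)^-1)%g b).
  by apply: (canLR (permK p)); rewrite decompE_inr /= !permKV.
split; first by move=> x; rewrite pinl; apply: H1.
split; first by move=> y b; rewrite pinr; apply: H2.
move=> y; under eq_bigr do rewrite pinr.
rewrite -(H3 ((t.1.2^-1)%g y)).
by rewrite [RHS](reindex_inj (@perm_inj _ ((t.2 y)^-1)%g)).
Qed.

Lemma symA_decomp (C : numClosedFieldType) X Y B D (HY : (0 < Y)%N) (HB : (0 < B)%N)
  (HD : (0 < D)%N) (pi : {perm Index X Y B}) :
  pi \in symA C X Y B D -> exists t, pi = @decomp X Y B t.
Proof.
rewrite inE => /asboolP Hpi.
have Hs : forall chi, valid chi -> valid (fun i => chi ((pi^-1)%g i)).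
  move=> chi Hv; have := Hpi (@Tc C X Y B D chi) ((feasible_Tc C HD chi).2 Hv).
  by move=> h; apply: (feasible_Tc C HD _).1; exact: h.
pose Gp := perm (@G_inj _ _ _ HY HB _ Hs).
exists (perm (K_inj HY HB Hs), Gp,
        [ffun z => perm (@H_inj _ _ _ HY HB _ Hs ((Gp^-1)%g z))]).
apply/permP => -[x|[y b]].
  by rewrite decompE_inl /= permE -(p_inl HY HB Hs) invgK.
rewrite decompE_inr /= ffunE permK /Gp.
by rewrite !permE -(p_inrE HY HB Hs) invgK.
Qed.

Theorem proposition1 (R : realType) (X Y B D : nat) :
  (0 < X)%N -> (0 < Y)%N -> (0 < B)%N -> (0 < D)%N ->
  (forall pi : {perm Index X Y B}, pi \in @symA R[i] X Y B D ->
     exists! t : {perm 'I_X} * {perm 'I_Y} * {ffun 'I_Y -> {perm 'I_B}},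
       pi = @decomp X Y B t) /\
  #|@symA R[i] X Y B D| = (X`! * Y`! * (B`! ^ Y))%N.
Proof.
move=> HX HY HB HD; split.
  move=> pi Hpi; have [t Ht] := symA_decomp HY HB HD Hpi.
  exists t; split => // t' Ht'; apply: (decomp_inj HB); by rewrite -Ht -Ht'.
have -> : @symA R[i] X Y B D = [set @decomp X Y B t | t in [set: _]].
  apply/setP => pi; apply/idP/imsetP.
    by move=> Hpi; have [t Ht] := symA_decomp HY HB HD Hpi; exists t.
  by move=> [t _ ->]; apply: decomp_in_symA.
rewrite card_imset; last exact: decomp_inj.
by rewrite cardsT !card_prod card_ffun !card_Sn !card_ord.
Qed.
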